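(* Let $n\ge 1$, let $\bar{X}_T=(X_T^1,\dots,X_T^n)$ be a random vector with values in $[0,\infty)^n$ and $\mathbb{Q}$ a pricing measure. For $0<p<\infty$ define $$h_p(\bar{x},\bar{K},K)=\left(\left(\sum_{i=1}^{n}\big((x_i-K_i)^{+}\big)^p\right)^{1/p}-K\right)^{+},\qquad \bar{x},\bar{K}\in[0,\infty)^n,\ K\ge0,$$ let $h_\infty=\lim_{p\to\infty}h_p$ pointwise (so $h_\infty(\bar{x},\bar{K},K)=(\max_i(x_i-K_i)^+-K)^+$), and set $V^p(\bar{K},K)=\mathbb{E}_{\mathbb{Q}}[h_p(\bar{X}_T,\bar{K},K)]$ for $0<p\le\infty$. Then for every $0<p\le\infty$ and all $K_1,\dots,K_n\ge0$, $$\sum_{i=1}^{n}\ \lim_{K_j\to\infty \text{ for all } j\neq i} V^p(K_1,\dots,K_n,0)=V^1(K_1,\dots,K_n,0).$$ The analogous identity holds for the payoff functions, i.e. for every $\bar{x}\in[0,\infty)^n$, $\sum_{i=1}^n \lim_{K_j\to\infty,\, j\ne i} h_p(\bar{x},K_1,\dots,K_n,0)=h_1(\bar{x},K_1,\dots,K_n,0)$, with the limits taken pointwise.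
   Context: Market model with deterministic interest rate, normalized to zero, so the price of a European option with payoff $f(\bar{X}_T)$ is $\mathbb{E}_{\mathbb{Q}}[f(\bar{X}_T)]$ under a (not necessarily unique) pricing measure $\mathbb{Q}$; $\bar{X}_T$ is the vector of asset prices at maturity. The option prices $V^p$ are assumed finite. $y^+=\max(y,0)$. *)

(* Defs.v *)
From HB Require Import structures.
From mathcomp Require Import all_boot all_order all_algebra.
From mathcomp Require Import all_classical all_reals all_analysis.
Set Implicit Arguments. Unset Strict Implicit. Unset Printing Implicit Defensive.
Import Order.TTheory GRing.Theory Num.Theory.
Local Open Scope ring_scope.

(* Payoff h_p(x, Kb, K) for p in (0, +oo]; p : \bar R.
   Finite p = r:  ( (sum_i ((x_i - Kb_i)^+)^r)^(1/r) - K )^+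
   p = +oo     :  ( max_i (x_i - Kb_i)^+ - K )^+   (the pointwise limit, as in the paper)
   p = -oo is irrelevant (never used, returns 0). *)
Definition hpay (R : realType) (n : nat) (p : \bar R)
    (x Kb : 'I_n -> R) (K : R) : R :=
  match p with
  | EFin r => Num.max (((\sum_(i < n) (Num.max (x i - Kb i) 0) `^ r) `^ r^-1) - K) 0
  | +oo%E => Num.max ((\big[Num.max/0]_(i < n) Num.max (x i - Kb i) 0) - K) 0
  | -oo%E => 0
  end.

Definition Vprice (R : realType) (d : measure_display) (T : measurableType d)
    (Q : probability T R) (n : nat) (X : 'I_n -> T -> R) (p : \bar R)
    (Kb : 'I_n -> R) (K : R) : R :=
  Rintegral Q setT (fun w => hpay p (fun i => X i w) Kb K).

Definition lim_others_infty (R : realType) (n : nat)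
    (f : ('I_n -> R) -> R) (i : 'I_n) (K : 'I_n -> R) (L : R) : Prop :=
  forall e : R, 0 < e -> exists M : R, forall K' : 'I_n -> R,
    (forall j, 0 <= K' j) -> K' i = K i ->
    (forall j, j != i -> M <= K' j) -> `|f K' - L| < e.

(* Main.v *)
From HB Require Import structures.
From mathcomp Require Import all_boot all_order all_algebra.
From mathcomp Require Import all_classical all_reals all_analysis.
From mathcomp Require Import measurable_realfun.
Require Import Defs.
Import Order.TTheory GRing.Theory Num.Theory.
Local Open Scope ring_scope.

Lemma hpay_single (R : realType) (n : nat) (p : \bar R) (x K : 'I_n -> R) (i : 'I_n) :
  (0 < p)%E -> (forall j, j != i -> x j <= K j) ->
  hpay p x K 0 = Num.max (x i - K i) 0.
Proof.
move=> p0 hj.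
have z j : j != i -> Num.max (x j - K j) 0 = 0.
  by move=> /hj ji; apply/max_idPr; rewrite subr_le0.
have a0 : 0 <= Num.max (x i - K i) 0 by rewrite le_max lexx orbT.
case: p p0 => [r||] //= r0.
  rewrite lte_fin in r0.
  rewrite (bigD1 i) //= big1; last by move=> j /z ->; rewrite powR0 // gt_eqF.
  rewrite addr0 -powRrM mulfV ?gt_eqF // powRr1 // subr0.
  by apply/max_idPl.
have -> : \big[Num.max/0]_(j < n) Num.max (x j - K j) 0 = Num.max (x i - K i) 0.
  apply/le_anti/andP; split; last exact: (le_bigmax _ (fun j => Num.max (x j - K j) 0) i).
  apply: bigmax_le => // j _; have [->|ji] := eqVneq j i; first by [].
  by rewrite z.
by rewrite subr0; apply/max_idPl.
Qed.

Lemma hpay_ge0 (R : realType) (n : nat) (p : \bar R) (x K : 'I_n -> R) :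
  0 <= hpay p x K 0.
Proof. by case: p => [r||] //=; rewrite le_max lexx orbT. Qed.

Lemma hpay_mono (R : realType) (n : nat) (p : \bar R) (x K : 'I_n -> R) :
  (0 < p)%E -> (forall j, 0 <= K j) ->
  hpay p x K 0 <= hpay p x (fun _ => 0) 0.
Proof.
move=> p0 K0.
have t j : Num.max (x j - K j) 0 <= Num.max (x j - 0) 0.
  apply: le_max2; last exact: lexx. rewrite subr0 gerBl; exact: K0.
case: p p0 => [r||] r0; rewrite /hpay; last exact: lexx.
  rewrite lte_fin in r0.
  apply: le_max2; last exact: lexx.
  rewrite lerD2r; apply: ge0_ler_powR;
    [by rewrite invr_ge0 ltW|by rewrite nnegrE; apply: sumr_ge0 => j _; exact: powR_ge0|
     by rewrite nnegrE; apply: sumr_ge0 => j _; exact: powR_ge0|].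
  apply: ler_sum => j _; apply: ge0_ler_powR; [exact: ltW| | |exact: t].
    by rewrite nnegrE le_max lexx orbT.
  by rewrite nnegrE le_max lexx orbT.
apply: le_max2; last exact: lexx.
rewrite lerD2r; apply: le_bigmax2 => j _; exact: t.
Qed.

Lemma hpay1 (R : realType) (n : nat) (x K : 'I_n -> R) :
  hpay 1%:E x K 0 = \sum_(i < n) Num.max (x i - K i) 0.
Proof.
rewrite /= invr1.
have s0 : 0 <= \sum_(i < n) Num.max (x i - K i) 0.
  by apply: sumr_ge0 => j _; rewrite le_max lexx orbT.
rewrite (eq_bigr (fun i => Num.max (x i - K i) 0)); last first.
  by move=> j _; rewrite powRr1 // le_max lexx orbT.
by rewrite powRr1 // subr0; apply/max_idPl.
Qed.

Lemma a_le_g (R : realType) (n : nat) (p : \bar R) (x Kb : 'I_n -> R) (i : 'I_n) :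
  (0 < p)%E -> (forall j, 0 <= x j) -> 0 <= Kb i ->
  Num.max (x i - Kb i) 0 <= hpay p x (fun _ => 0) 0.
Proof.
move=> p0 x0 k0.
pose K'' := fun j => if j == i then Kb i else x j.
have h := @hpay_single R n p x K'' i p0.
have e : Num.max (x i - Kb i) 0 = hpay p x K'' 0.
  rewrite h; first by rewrite /K'' eqxx.
  by move=> j /negbTE ji; rewrite /K'' ji; exact: lexx.
rewrite e; apply: hpay_mono => // j; rewrite /K''; case: (j == i) => //.
Qed.

Lemma x_le_sum (R : realType) (n : nat) (x : 'I_n -> R) j :
  (forall k, 0 <= x k) -> x j <= \sum_(k < n) x k.
Proof.
move=> x0; rewrite (bigD1 j) //= lerDl; apply: sumr_ge0 => k _; exact: x0.
Qed.

Lemma intD (d : measure_display) (T : measurableType d) (R : realType)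
  (mu : {measure set T -> \bar R}) (u v : T -> R) :
  mu.-integrable setT (EFin \o u) -> mu.-integrable setT (EFin \o v) ->
  mu.-integrable setT (EFin \o (fun x => u x + v x)).
Proof.
move=> iu iv.
apply: (eq_integrable measurableT _ _ _ (integrableD measurableT iu iv)).
by move=> x _ /=; rewrite EFinD.
Qed.

Lemma Rintegral_sum_seq (d : measure_display) (T : measurableType d) (R : realType)
  (mu : {measure set T -> \bar R}) (I : Type) (f : I -> T -> R) (s : seq I) :
  (forall i, mu.-integrable setT (EFin \o f i)) ->
  Rintegral mu setT (fun x => \sum_(i <- s) f i x) = \sum_(i <- s) Rintegral mu setT (f i).
Proof.
move=> fi; elim: s => [|a s IH].
  rewrite big_nil (_ : (fun x => _) = (fun _ => 0)); last by apply: funext => x; rewrite big_nil.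
  by rewrite Rintegral_cst // mul0r.
rewrite big_cons (_ : (fun x => _) = (fun x => f a x + \sum_(i <- s) f i x)); last first.
  by apply: funext => x; rewrite big_cons.
rewrite RintegralD //; first by rewrite IH.
have := integrable_sum measurableT s (P := xpredT) (fun i _ => fi i).
apply: (eq_integrable measurableT) => x _ /=.
by rewrite sumEFin.
Qed.

Theorem mainTheorem2 (R : realType) (d : measure_display) (T : measurableType d)
    (Q : probability T R) (n : nat) (X : 'I_n -> T -> R) :
  (0 < n)%N ->
  (forall i, measurable_fun setT (X i)) ->
  (forall i w, 0 <= X i w) ->
  (* all option prices V^q(Kb, 0), 0 < q <= oo, Kb >= 0, are finite *)
  (forall (q : \bar R) (Kb : 'I_n -> R), (0 < q)%E -> (forall i, 0 <= Kb i) ->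
     Q.-integrable setT (fun w => (hpay q (fun i => X i w) Kb 0)%:E)) ->
  forall (p : \bar R), (0 < p)%E ->
  forall (Kb : 'I_n -> R), (forall i, 0 <= Kb i) ->
    (exists L : 'I_n -> R,
       (forall i, lim_others_infty (fun K' => Vprice Q X p K' 0) i Kb (L i)) /\
       \sum_(i < n) L i = Vprice Q X (1%:E) Kb 0) /\
    (forall x : 'I_n -> R, (forall i, 0 <= x i) ->
     exists L : 'I_n -> R,
       (forall i, lim_others_infty (fun K' => hpay p x K' 0) i Kb (L i)) /\
       \sum_(i < n) L i = hpay (1%:E) x Kb 0).
Proof.
move=> n0 mX X0 hint p p0 Kb Kb0.
split; last first.
  move=> x x0; exists (fun i => Num.max (x i - Kb i) 0); split; last by rewrite hpay1.
  move=> i e e0; exists (\sum_(k < n) x k) => K' K'0 K'i K'M.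
  rewrite (@hpay_single R n p x K' i p0); last first.
    by move=> j ji; apply: le_trans (@x_le_sum R n x j x0) (K'M j ji).
  by rewrite K'i subrr normr0.
pose g w := hpay p (fun j => X j w) (fun _ => 0) 0.
pose a i w := Num.max (X i w - Kb i) 0.
have ig : Q.-integrable setT (EFin \o g) := hint p (fun _ => 0) p0 (fun _ => lexx 0).
have mg : measurable_fun setT g.
  by case/integrableP: ig => /measurable_EFinP.
have ma i : measurable_fun setT (a i).
  apply: measurable_maxr; last exact: measurable_cst.
  apply: measurable_funB; [exact: mX|exact: measurable_cst].
have a0 i w : 0 <= a i w by rewrite /a le_max lexx orbT.
have ag i w : a i w <= g w by apply: a_le_g => //; exact: Kb0.
have ia i : Q.-integrable setT (EFin \o a i).
  apply: (le_integrable measurableT _ _ ig); first exact/measurable_EFinP.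
  move=> w _ /=; rewrite lee_fin !ger0_norm; [|exact: hpay_ge0|exact: a0]. exact: ag.
exists (fun i => Rintegral Q setT (a i)); split; last first.
  rewrite -Rintegral_sum_seq // /Vprice; congr Rintegral; apply: funext => w.
  by rewrite hpay1.
move=> i e e0.
pose S w := \sum_(k < n) X k w.
have mS : measurable_fun setT S by apply: measurable_sum => k; exact: mX.
pose f_ (m : nat) w := g w * (if m%:R < S w then 1 else 0).
have mf m : measurable_fun setT (EFin \o f_ m).
  apply/measurable_EFinP; apply: measurable_funM => //.
  apply: measurable_fun_ifT; [|exact: measurable_cst|exact: measurable_cst].
  apply: measurable_fun_ltr => //; exact: measurable_cst.
have f0 m w : 0 <= f_ m w.
  by rewrite /f_; case: ifP => _; rewrite ?mulr1 ?mulr0 ?lexx //; exact: hpay_ge0.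
have fg m w : f_ m w <= g w.
  by rewrite /f_; case: ifP => _; rewrite ?mulr1 ?mulr0 ?lexx //; exact: hpay_ge0.
have if_ m : Q.-integrable setT (EFin \o f_ m).
  apply: (le_integrable measurableT _ _ ig); first exact: mf.
  move=> w _ /=; rewrite lee_fin (ger0_norm (f0 m w)) ger0_norm; [exact: fg|exact: hpay_ge0].
have fcvg : \forall x \ae Q, setT x ->
    ((fun m => (EFin \o f_ m) x) @ \oo --> (cst 0%E : T -> \bar R) x)%classic.
  apply: aeW => w _; apply: cvg_near_cst.
  have := nbhs_infty_gtr (S w); apply: filterS => m hm /=.
  rewrite /f_ ifF ?mulr0 //; apply/negbTE; rewrite -leNgt; exact: ltW.
have fdom : \forall x \ae Q, forall m, setT x -> (`|(EFin \o f_ m) x| <= (EFin \o g) x)%E.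
  apply: aeW => w m _ /=; rewrite lee_fin (ger0_norm (f0 m w)); exact: fg.
have [_ _ cvgf] := @dominated_convergence d T R Q setT measurableT
  (fun m => EFin \o f_ m) (cst 0%E) (EFin \o g) mf (measurable_cst _) fcvg ig fdom.
rewrite integral0 in cvgf.
move/fine_cvgP: cvgf => [_ /cvgr_dist_lt/(_ e e0) hN].
have [N _ HN] := hN.
have hF : Rintegral Q setT (f_ N) < e.
  have := HN N (leqnn N); rewrite sub0r normrN ger0_norm //.
  exact: (@Rintegral_ge0 _ _ _ Q setT (f_ N) (fun w _ => f0 N w)).
exists N%:R => K' K'0 K'i K'M.
pose h w := hpay p (fun j => X j w) K' 0.
have ih : Q.-integrable setT (EFin \o h) := hint p K' p0 K'0.
have key w : h w <= a i w + f_ N w /\ a i w <= h w + f_ N w.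
  case: (ltP (N%:R) (S w)) => hS.
    have -> : f_ N w = g w by rewrite /f_ hS mulr1.
    split; apply: ler_wpDl; [exact: a0|exact: hpay_mono|exact: hpay_ge0|exact: ag].
  have -> : f_ N w = 0.
    by rewrite /f_ ifF ?mulr0 //; apply/negbTE; rewrite -leNgt.
  have -> : h w = a i w.
    rewrite /h (@hpay_single R n p (fun j => X j w) K' i p0); first by rewrite K'i.
    move=> j ji; apply: le_trans (K'M j ji); apply: le_trans hS.
    exact: (@x_le_sum R n (fun k => X k w) j (fun k => X0 k w)).
  by rewrite addr0; split; exact: lexx.
rewrite /Vprice; apply: le_lt_trans hF.
rewrite ler_distl; apply/andP; split.
  rewrite lerBlDr -RintegralD; [|exact: measurableT|exact: ih|exact: if_].
  apply: le_Rintegral; [exact: measurableT|exact: ia|exact: (@intD _ _ _ Q _ _ ih (if_ N))|].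
  by move=> w _; case: (key w).
rewrite -RintegralD; [|exact: measurableT|exact: ia|exact: if_].
apply: le_Rintegral; [exact: measurableT|exact: ih|exact: (@intD _ _ _ Q _ _ (ia i) (if_ N))|].
by move=> w _; case: (key w).
Qed.
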